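(* Let $\{(\Gamma_t,\theta_t)\}_{t\in[0,\underline t)}$ evolve by $\partial_t\gamma=\kappa\nu_\theta+\upsilon_T T$, $\partial_t\theta=\upsilon_\theta$, where for all $t\in[0,\underline t)$ and all $s\in\mathbb{R}/L(\Gamma_t)\mathbb{Z}$ (arclength measured from the point $u=0$) the tangential velocity satisfies $$\upsilon_T(t,s)=\upsilon_{T,0}(t)+\int_0^s\kappa\psi_1\,d\bar s-\frac{s}{L(\Gamma_t)}\int_{\Gamma_t}\kappa\psi_1\,d\bar s,$$ with $\upsilon_{T,0}\in\mathcal C^1([0,\underline t))$ arbitrary. Then for every $u\in S^1$ the quantity $g(t,u)/L(\Gamma_t)$ is constant in $t$.
   Context: $S^1=\mathbb{R}/2\pi\mathbb{Z}$; $\Gamma_t$ is a closed curve parametrized by $\gamma(t,\cdot):S^1\to\mathbb{R}^3$, $g=\|\partial_u\gamma\|$, $ds=g\,du$, $\partial_s=g^{-1}\partial_u$, $L(\Gamma_t)=\int_{\Gamma_t}ds$ its length. $T,N,B$ is the Frenet frame, $\kappa$ the curvature. For an angle function $\theta(t,u)\in S^1$, $\nu_\theta=\cos\theta\,N+\sin\theta\,B$ and $\psi_1=\kappa\cos\theta$ (note $\kappa\nu_\theta=\cos\theta\,\partial_s^2\gamma+\sin\theta\,\partial_s\gamma\times\partial_s^2\gamma$). $\upsilon_\theta$ is a given $\mathcal C^1$ function. *)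

(* Defs.v *)
From Stdlib Require Import Reals.
From Coquelicot Require Import Coquelicot.
Open Scope R_scope.

Definition V3 := (R * R * R)%type.
Definition mkV (a b c : R) : V3 := ((a, b), c).
Definition vx (v : V3) : R := fst (fst v).
Definition vy (v : V3) : R := snd (fst v).
Definition vz (v : V3) : R := snd v.
Definition vadd (v w : V3) : V3 := mkV (vx v + vx w) (vy v + vy w) (vz v + vz w).
Definition vscale (a : R) (v : V3) : V3 := mkV (a * vx v) (a * vy v) (a * vz v).
Definition vdot (v w : V3) : R := vx v * vx w + vy v * vy w + vz v * vz w.
Definition vcross (v w : V3) : V3 :=
  mkV (vy v * vz w - vz v * vy w) (vz v * vx w - vx v * vz w) (vx v * vy w - vy v * vx w).
Definition vnorm (v : V3) : R := sqrt (vdot v v).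

Definition pdt (f : R -> R -> R) (t u : R) : R := Derive (fun t' => f t' u) t.
Definition pdu (f : R -> R -> R) (t u : R) : R := Derive (fun u' => f t u') u.
Definition pdtV (c : R -> R -> V3) (t u : R) : V3 :=
  mkV (pdt (fun t u => vx (c t u)) t u) (pdt (fun t u => vy (c t u)) t u)
      (pdt (fun t u => vz (c t u)) t u).
Definition pduV (c : R -> R -> V3) (t u : R) : V3 :=
  mkV (pdu (fun t u => vx (c t u)) t u) (pdu (fun t u => vy (c t u)) t u)
      (pdu (fun t u => vz (c t u)) t u).

Definition cont2 (f : R -> R -> R) (t u : R) : Prop :=
  continuous (fun p : R * R => f (fst p) (snd p)) (t, u).

Fixpoint Ck_on (k : nat) (D : R -> R -> Prop) (f : R -> R -> R) : Prop :=
  (forall t u, D t u -> cont2 f t u) /\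
  match k with
  | O => True
  | S k' =>
      (forall t u, D t u -> ex_derive (fun t' => f t' u) t /\ ex_derive (fun u' => f t u') u)
      /\ Ck_on k' D (pdt f) /\ Ck_on k' D (pdu f)
  end.

Definition smooth_on (D : R -> R -> Prop) (f : R -> R -> R) : Prop := forall k, Ck_on k D f.

Definition smoothV_on (D : R -> R -> Prop) (c : R -> R -> V3) : Prop :=
  smooth_on D (fun t u => vx (c t u)) /\ smooth_on D (fun t u => vy (c t u)) /\
  smooth_on D (fun t u => vz (c t u)).

Definition cont2_within (D : R -> R -> Prop) (f : R -> R -> R) (t u : R) : Prop :=
  filterlim (fun p : R * R => f (fst p) (snd p))
    (within (fun p : R * R => D (fst p) (snd p)) (locally (t, u))) (locally (f t u)).

(** Geometric quantities of gamma(t,.) : parameter u in R, 2*PI-periodic *)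
Definition speed (c : R -> R -> V3) (t u : R) : R := vnorm (pduV c t u).
Definition tangent (c : R -> R -> V3) (t u : R) : V3 := vscale (/ speed c t u) (pduV c t u).
Definition dss (c : R -> R -> V3) (t u : R) : V3 :=
  vscale (/ speed c t u) (pduV (tangent c) t u).
Definition curvature (c : R -> R -> V3) (t u : R) : R := vnorm (dss c t u).
Definition kappa_nu (c : R -> R -> V3) (th : R -> R -> R) (t u : R) : V3 :=
  vadd (vscale (cos (th t u)) (dss c t u))
       (vscale (sin (th t u)) (vcross (tangent c t u) (dss c t u))).
Definition psi1 (c : R -> R -> V3) (th : R -> R -> R) (t u : R) : R :=
  curvature c t u * cos (th t u).
Definition curve_length (c : R -> R -> V3) (t : R) : R :=
  RInt (fun u => speed c t u) 0 (2 * PI).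
Definition arclen (c : R -> R -> V3) (t u : R) : R :=
  RInt (fun w => speed c t w) 0 u.
(* int_0^{s(u)} kappa psi_1 ds = int_0^u kappa psi_1 g du *)
Definition int_kpsi (c : R -> R -> V3) (th : R -> R -> R) (t u : R) : R :=
  RInt (fun w => curvature c t w * psi1 c th t w * speed c t w) 0 u.

(* Main.v *)
Require Import Defs.
From Stdlib Require Import Reals Lra ZArith.
From Coquelicot Require Import Coquelicot.
Open Scope R_scope.

Lemma dR_plus (f g : R -> R) (x df dg : R) : is_derive f x df -> is_derive g x dg ->
  is_derive (fun y => f y + g y) x (df + dg).
Proof. intros; now apply (is_derive_plus f g). Qed.
Lemma dR_minus (f g : R -> R) (x df dg : R) : is_derive f x df -> is_derive g x dg ->
  is_derive (fun y => f y - g y) x (df - dg).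
Proof. intros; now apply (is_derive_minus f g). Qed.
Lemma dR_mult (f g : R -> R) (x df dg : R) : is_derive f x df -> is_derive g x dg ->
  is_derive (fun y => f y * g y) x (df * g x + f x * dg).
Proof. intros; apply (is_derive_mult f g); auto. intros; apply Rmult_comm. Qed.
Lemma dR_val (f : R -> R) (x l l' : R) : is_derive f x l -> l = l' -> is_derive f x l'.
Proof. intros H ->; exact H. Qed.

Lemma T_unit (P1 P2 P3 : R) : 0 < sqrt (P1*P1+P2*P2+P3*P3) ->
  let g := sqrt (P1*P1+P2*P2+P3*P3) in
  (/g*P1)*(/g*P1) + (/g*P2)*(/g*P2) + (/g*P3)*(/g*P3) = 1.
Proof.
  intros Hg g.
  assert (E: g * g = P1*P1+P2*P2+P3*P3).
  { unfold g; apply sqrt_sqrt. nra. }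
  assert (g <> 0) by (unfold g; lra).
  replace ((/g*P1)*(/g*P1) + (/g*P2)*(/g*P2) + (/g*P3)*(/g*P3)) with
    ((P1*P1+P2*P2+P3*P3) / (g*g)) by (field; auto).
  rewrite <- E. field; auto.
Qed.

Lemma exd_T (P1 P2 P3 : R -> R) u :
  0 < sqrt (P1 u * P1 u + P2 u * P2 u + P3 u * P3 u) ->
  ex_derive P1 u -> ex_derive P2 u -> ex_derive P3 u ->
  ex_derive (fun u => sqrt (P1 u * P1 u + P2 u * P2 u + P3 u * P3 u)) u /\
  ex_derive (fun u => / sqrt (P1 u * P1 u + P2 u * P2 u + P3 u * P3 u) * P1 u) u.
Proof.
  intros Hg [d1 H1] [d2 H2] [d3 H3].
  assert (HQ : 0 < P1 u * P1 u + P2 u * P2 u + P3 u * P3 u).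
  { destruct (Rle_or_lt (P1 u * P1 u + P2 u * P2 u + P3 u * P3 u) 0) as [h|h]; [|exact h].
    rewrite sqrt_neg_0 in Hg; lra. }
  assert (Hs : is_derive (fun u => sqrt (P1 u * P1 u + P2 u * P2 u + P3 u * P3 u)) u
     ((d1 * P1 u + P1 u * d1 + (d2 * P2 u + P2 u * d2) + (d3 * P3 u + P3 u * d3)) /
      (2 * sqrt (P1 u * P1 u + P2 u * P2 u + P3 u * P3 u)))).
  { apply (is_derive_sqrt (fun u => P1 u * P1 u + P2 u * P2 u + P3 u * P3 u)); [|exact HQ].
    apply dR_plus; [apply dR_plus|]; apply dR_mult; assumption. }
  split. eexists; exact Hs.
  eexists. apply dR_mult; [|exact H1].
  apply (is_derive_inv (fun u => sqrt (P1 u * P1 u + P2 u * P2 u + P3 u * P3 u))). exact Hs.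
  apply Rgt_not_eq. exact Hg.
Qed.

Lemma TdT (P1 P2 P3 : R -> R) u :
  let g := fun u => sqrt (P1 u * P1 u + P2 u * P2 u + P3 u * P3 u) in
  let T1 := fun u => / g u * P1 u in
  let T2 := fun u => / g u * P2 u in
  let T3 := fun u => / g u * P3 u in
  (forall u, 0 < g u) ->
  (forall u, ex_derive P1 u) -> (forall u, ex_derive P2 u) -> (forall u, ex_derive P3 u) ->
  ex_derive g u /\ ex_derive T1 u /\ ex_derive T2 u /\ ex_derive T3 u /\
  T1 u * Derive T1 u + T2 u * Derive T2 u + T3 u * Derive T3 u = 0.
Proof.
  intros g T1 T2 T3 Hg E1 E2 E3.
  destruct (exd_T P1 P2 P3 u (Hg u) (E1 u) (E2 u) (E3 u)) as [X0 X1].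
  assert (X2 : ex_derive T2 u).
  { assert (h : 0 < sqrt (P2 u * P2 u + P3 u * P3 u + P1 u * P1 u)).
    { specialize (Hg u); unfold g in Hg.
      replace (P2 u * P2 u + P3 u * P3 u + P1 u * P1 u)
      with (P1 u * P1 u + P2 u * P2 u + P3 u * P3 u) by ring; exact Hg. }
    destruct (exd_T P2 P3 P1 u h (E2 u) (E3 u) (E1 u)) as [_ h2].
    eapply ex_derive_ext; [|exact h2]. intros v. cbv beta. unfold T2, g.
    replace (P2 v * P2 v + P3 v * P3 v + P1 v * P1 v)
      with (P1 v * P1 v + P2 v * P2 v + P3 v * P3 v) by ring; reflexivity. }
  assert (X3 : ex_derive T3 u).
  { assert (h : 0 < sqrt (P3 u * P3 u + P1 u * P1 u + P2 u * P2 u)).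
    { specialize (Hg u); unfold g in Hg.
      replace (P3 u * P3 u + P1 u * P1 u + P2 u * P2 u)
      with (P1 u * P1 u + P2 u * P2 u + P3 u * P3 u) by ring; exact Hg. }
    destruct (exd_T P3 P1 P2 u h (E3 u) (E1 u) (E2 u)) as [_ h2].
    eapply ex_derive_ext; [|exact h2]. intros v. cbv beta. unfold T3, g.
    replace (P3 v * P3 v + P1 v * P1 v + P2 v * P2 v)
      with (P1 v * P1 v + P2 v * P2 v + P3 v * P3 v) by ring; reflexivity. }
  do 4 (split; [assumption|]).
  assert (D : is_derive (fun u => T1 u * T1 u + T2 u * T2 u + T3 u * T3 u) u
     (2 * (T1 u * Derive T1 u + T2 u * Derive T2 u + T3 u * Derive T3 u))).
  { eapply dR_val. apply dR_plus; [apply dR_plus|]; apply dR_mult; apply Derive_correct; assumption.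
    ring. }
  assert (D0 : is_derive (fun u => T1 u * T1 u + T2 u * T2 u + T3 u * T3 u) u 0).
  { eapply is_derive_ext; [|apply (is_derive_const 1)].
    intros v; cbv beta. unfold T1, T2, T3. symmetry. apply T_unit. apply Hg. }
  apply is_derive_unique in D. apply is_derive_unique in D0. lra.
Qed.

Lemma core (P1 P2 P3 W1 W2 W3 C S V H : R -> R) (I L u0 : R) :
  let g := fun u => sqrt (P1 u * P1 u + P2 u * P2 u + P3 u * P3 u) in
  let T1 := fun u => / g u * P1 u in
  let T2 := fun u => / g u * P2 u in
  let T3 := fun u => / g u * P3 u in
  let d1 := fun u => / g u * Derive T1 u in
  let d2 := fun u => / g u * Derive T2 u in
  let d3 := fun u => / g u * Derive T3 u in
  (forall u, 0 < g u) ->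
  (forall u, ex_derive P1 u) -> (forall u, ex_derive P2 u) -> (forall u, ex_derive P3 u) ->
  (forall u, W1 u = C u * d1 u + S u * (T2 u * d3 u - T3 u * d2 u) + V u * T1 u) ->
  (forall u, W2 u = C u * d2 u + S u * (T3 u * d1 u - T1 u * d3 u) + V u * T2 u) ->
  (forall u, W3 u = C u * d3 u + S u * (T1 u * d2 u - T2 u * d1 u) + V u * T3 u) ->
  is_derive V u0 (H u0 - g u0 / L * I) ->
  H u0 = sqrt (d1 u0 * d1 u0 + d2 u0 * d2 u0 + d3 u0 * d3 u0) *
         (sqrt (d1 u0 * d1 u0 + d2 u0 * d2 u0 + d3 u0 * d3 u0) * C u0) * g u0 ->
  ex_derive W1 u0 -> ex_derive W2 u0 -> ex_derive W3 u0 ->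
  P1 u0 * Derive W1 u0 + P2 u0 * Derive W2 u0 + P3 u0 * Derive W3 u0 = - (g u0 * (g u0 / L * I)).
Proof.
  intros g T1 T2 T3 d1 d2 d3 Hg E1 E2 E3 HW1 HW2 HW3 HV HH F1 F2 F3.
  assert (TT : forall u, T1 u * Derive T1 u + T2 u * Derive T2 u + T3 u * Derive T3 u = 0).
  { intros u; apply (TdT P1 P2 P3 u Hg E1 E2 E3). }
  destruct (TdT P1 P2 P3 u0 Hg E1 E2 E3) as [G0 [X1 [X2 [X3 _]]]].
  assert (VW : forall u, V u = T1 u * W1 u + T2 u * W2 u + T3 u * W3 u).
  { intros u. rewrite HW1, HW2, HW3.
    assert (U : T1 u * T1 u + T2 u * T2 u + T3 u * T3 u = 1).
    { unfold T1, T2, T3. apply T_unit. apply Hg. }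
    transitivity (C u * / g u * (T1 u * Derive T1 u + T2 u * Derive T2 u + T3 u * Derive T3 u)
                  + V u * (T1 u * T1 u + T2 u * T2 u + T3 u * T3 u)).
    - rewrite TT, U; ring.
    - unfold d1, d2, d3; ring. }
  assert (DV : is_derive V u0 (Derive T1 u0 * W1 u0 + T1 u0 * Derive W1 u0 +
                               (Derive T2 u0 * W2 u0 + T2 u0 * Derive W2 u0) +
                               (Derive T3 u0 * W3 u0 + T3 u0 * Derive W3 u0))).
  { eapply is_derive_ext. intros u; symmetry; apply VW.
    apply dR_plus; [apply dR_plus|]; apply dR_mult; apply Derive_correct; assumption. }
  apply is_derive_unique in DV. apply is_derive_unique in HV. rewrite HV in DV.
  clear HV.
  assert (g0 : g u0 <> 0) by (apply Rgt_not_eq; apply Hg).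
  assert (Dd1 : Derive T1 u0 = g u0 * d1 u0) by (unfold d1; field; exact g0).
  assert (Dd2 : Derive T2 u0 = g u0 * d2 u0) by (unfold d2; field; exact g0).
  assert (Dd3 : Derive T3 u0 = g u0 * d3 u0) by (unfold d3; field; exact g0).
  assert (K2 : sqrt (d1 u0 * d1 u0 + d2 u0 * d2 u0 + d3 u0 * d3 u0) *
               sqrt (d1 u0 * d1 u0 + d2 u0 * d2 u0 + d3 u0 * d3 u0) =
               d1 u0 * d1 u0 + d2 u0 * d2 u0 + d3 u0 * d3 u0).
  { apply sqrt_sqrt. nra. }
  assert (S1 : Derive T1 u0 * W1 u0 + Derive T2 u0 * W2 u0 + Derive T3 u0 * W3 u0 = H u0).
  { rewrite HH, HW1, HW2, HW3.
    transitivity (g u0 * C u0 * (d1 u0 * d1 u0 + d2 u0 * d2 u0 + d3 u0 * d3 u0)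
       + V u0 * (T1 u0 * Derive T1 u0 + T2 u0 * Derive T2 u0 + T3 u0 * Derive T3 u0)).
    - rewrite Dd1, Dd2, Dd3. ring.
    - rewrite TT. rewrite Rmult_0_r, Rplus_0_r.
      match goal with |- _ = ?a * (?b * ?c) * ?d => replace (a * (b * c) * d) with ((a * b) * c * d) by ring end.
      rewrite K2. ring. }
  assert (Pi : forall u, P1 u = g u * T1 u /\ P2 u = g u * T2 u /\ P3 u = g u * T3 u).
  { intros u; assert (g u <> 0) by (apply Rgt_not_eq; apply Hg).
    unfold T1, T2, T3; repeat split; field; assumption. }
  destruct (Pi u0) as [e1 [e2 e3]]. rewrite e1, e2, e3.
  assert (TD : T1 u0 * Derive W1 u0 + T2 u0 * Derive W2 u0 + T3 u0 * Derive W3 u0 = - (g u0 / L * I)) by lra.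
  transitivity (g u0 * (T1 u0 * Derive W1 u0 + T2 u0 * Derive W2 u0 + T3 u0 * Derive W3 u0)).
  ring. rewrite TD. ring.
Qed.

Lemma cR_mult (f g : R -> R) x : continuous f x -> continuous g x -> continuous (fun y => f y * g y) x.
Proof. intros; apply (continuous_mult f g); assumption. Qed.
Lemma cR_plus (f g : R -> R) x : continuous f x -> continuous g x -> continuous (fun y => f y + g y) x.
Proof. intros; apply (continuous_plus f g); assumption. Qed.
Lemma cR_inv (f : R -> R) x : continuous f x -> f x <> 0 -> continuous (fun y => / f y) x.
Proof. intros; apply (continuous_Rinv_comp f); assumption. Qed.
Lemma cR_sqrt (f : R -> R) x : continuous f x -> continuous (fun y => sqrt (f y)) x.
Proof. intros; apply (continuous_sqrt_comp f); assumption. Qed.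
Lemma cR_d (f : R -> R) x : ex_derive f x -> continuous f x.
Proof. intros; apply (ex_derive_continuous (K := R_AbsRing) (V := R_NormedModule)); assumption. Qed.

Lemma dT_cont (P1 P2 P3 Pa : R -> R) u :
  let g := fun u => sqrt (P1 u * P1 u + P2 u * P2 u + P3 u * P3 u) in
  (forall u, 0 < g u) ->
  (forall u, ex_derive P1 u) -> (forall u, ex_derive P2 u) -> (forall u, ex_derive P3 u) ->
  (forall u, ex_derive Pa u) ->
  (forall u, ex_derive (Derive P1) u) -> (forall u, ex_derive (Derive P2) u) ->
  (forall u, ex_derive (Derive P3) u) -> (forall u, ex_derive (Derive Pa) u) ->
  continuous (Derive (fun u => / g u * Pa u)) u.
Proof.
  intros g Hg E1 E2 E3 Ea F1 F2 F3 Fa.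
  assert (HQ : forall u, 0 < P1 u * P1 u + P2 u * P2 u + P3 u * P3 u).
  { intros v. specialize (Hg v). unfold g in Hg.
    destruct (Rle_or_lt (P1 v * P1 v + P2 v * P2 v + P3 v * P3 v) 0) as [h|h]; [|exact h].
    rewrite sqrt_neg_0 in Hg; lra. }
  set (E := fun u => - ((Derive P1 u * P1 u + P1 u * Derive P1 u + (Derive P2 u * P2 u + P2 u * Derive P2 u)
              + (Derive P3 u * P3 u + P3 u * Derive P3 u)) / (2 * g u) / (g u * g u)) * Pa u
              + / g u * Derive Pa u).
  apply continuous_ext with E.
  { intros v. symmetry. apply is_derive_unique. unfold E, g.
    specialize (HQ v). assert (sqrt (P1 v * P1 v + P2 v * P2 v + P3 v * P3 v) <> 0)
      by (apply Rgt_not_eq; apply Hg).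
    auto_derive.
    - repeat split; try assumption; auto.
    - change (fun x : R => P1 x) with P1; change (fun x : R => P2 x) with P2; change (fun x : R => P3 x) with P3; change (fun x : R => Pa x) with Pa. field. assumption. }
  apply cR_d. unfold E, g. specialize (HQ u).
  assert (sqrt (P1 u * P1 u + P2 u * P2 u + P3 u * P3 u) <> 0)
      by (apply Rgt_not_eq; apply Hg).
  auto_derive. repeat split; try assumption; auto.
Qed.

Lemma contH (P1 P2 P3 C : R -> R) u :
  let g := fun u => sqrt (P1 u * P1 u + P2 u * P2 u + P3 u * P3 u) in
  let T1 := fun u => / g u * P1 u in
  let T2 := fun u => / g u * P2 u in
  let T3 := fun u => / g u * P3 u in
  let d1 := fun u => / g u * Derive T1 u in
  let d2 := fun u => / g u * Derive T2 u in
  let d3 := fun u => / g u * Derive T3 u in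
  (forall u, 0 < g u) ->
  (forall u, ex_derive P1 u) -> (forall u, ex_derive P2 u) -> (forall u, ex_derive P3 u) ->
  (forall u, ex_derive (Derive P1) u) -> (forall u, ex_derive (Derive P2) u) ->
  (forall u, ex_derive (Derive P3) u) -> (forall u, continuous C u) ->
  continuous g u /\
  continuous (fun u => sqrt (d1 u * d1 u + d2 u * d2 u + d3 u * d3 u) *
         (sqrt (d1 u * d1 u + d2 u * d2 u + d3 u * d3 u) * C u) * g u) u.
Proof.
  intros g T1 T2 T3 d1 d2 d3 Hg E1 E2 E3 F1 F2 F3 HC.
  assert (Cg : continuous g u).
  { apply cR_d. destruct (TdT P1 P2 P3 u Hg E1 E2 E3) as [h _]. exact h. }
  assert (Ci : continuous (fun u => / g u) u).
  { apply cR_inv. exact Cg. apply Rgt_not_eq, Hg. }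
  assert (C1 : continuous d1 u).
  { apply cR_mult. exact Ci. apply (dT_cont P1 P2 P3 P1); assumption. }
  assert (C2 : continuous d2 u).
  { apply cR_mult. exact Ci. apply (dT_cont P1 P2 P3 P2); assumption. }
  assert (C3 : continuous d3 u).
  { apply cR_mult. exact Ci. apply (dT_cont P1 P2 P3 P3); assumption. }
  assert (Cs : continuous (fun u => sqrt (d1 u * d1 u + d2 u * d2 u + d3 u * d3 u)) u).
  { apply cR_sqrt. apply cR_plus; [apply cR_plus|]; apply cR_mult; assumption. }
  split. exact Cg.
  apply cR_mult; [apply cR_mult; [exact Cs| apply cR_mult; [exact Cs | apply HC]] | exact Cg].
Qed.

Lemma ftc (h : R -> R) u : (forall z, continuous h z) ->
  is_derive (fun b => RInt h 0 b) u (h u).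
Proof.
  intros Hc. apply (is_derive_RInt h (fun b => RInt h 0 b) 0 u).
  - apply filter_forall. intros b. apply (RInt_correct (V := R_CompleteNormedModule)).
    apply (ex_RInt_continuous (V := R_CompleteNormedModule)). intros; apply Hc.
  - apply Hc.
Qed.

Lemma sm_pdt D f : smooth_on D f -> smooth_on D (pdt f).
Proof. intros H k. destruct (H (S k)) as [_ [_ [h _]]]. exact h. Qed.
Lemma sm_pdu D f : smooth_on D f -> smooth_on D (pdu f).
Proof. intros H k. destruct (H (S k)) as [_ [_ [_ h]]]. exact h. Qed.
Lemma sm_basic D f t u : smooth_on D f -> D t u ->
  cont2 f t u /\ ex_derive (fun t' => f t' u) t /\ ex_derive (fun u' => f t u') u.
Proof. intros H Hd. destruct (H 1%nat) as [c [d _]]. split. apply c, Hd. apply d, Hd. Qed.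

Lemma schwarz_sm tb f t u : smooth_on (fun t _ => 0 < t < tb) f -> 0 < t < tb ->
  pdt (pdu f) t u = pdu (pdt f) t u.
Proof.
  intros Hs Ht.
  apply (Schwarz f t u).
  - assert (hd : 0 < Rmin t (tb - t)) by (apply Rmin_glb_lt; lra).
    exists (mkposreal _ hd). intros a b Ha Hb. simpl in Ha.
    assert (Da : 0 < a < tb).
    { pose proof (Rmin_l t (tb - t)); pose proof (Rmin_r t (tb - t)).
      apply Rabs_def2 in Ha. lra. }
    split; [apply (sm_basic _ f a b Hs Da)|].
    split; [apply (sm_basic _ f a b Hs Da)|].
    split; [apply (sm_basic _ (pdu f) a b (sm_pdu _ _ Hs) Da)|].
    apply (sm_basic _ (pdt f) a b (sm_pdt _ _ Hs) Da).
  - apply continuity_2d_pt_filterlim.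
    apply (sm_basic _ (pdt (pdu f)) t u (sm_pdt _ _ (sm_pdu _ _ Hs)) Ht).
  - apply continuity_2d_pt_filterlim.
    apply (sm_basic _ (pdu (pdt f)) t u (sm_pdu _ _ (sm_pdt _ _ Hs)) Ht).
Qed.

Lemma loc_int u : 0 < u < 2 * PI -> locally u (fun v => 0 <= v < 2 * PI).
Proof.
  intros Hu. assert (hd : 0 < Rmin u (2 * PI - u)) by (apply Rmin_glb_lt; lra).
  exists (mkposreal _ hd). intros v Hv. 
  change (Rabs (v - u) < Rmin u (2 * PI - u)) in Hv.
  pose proof (Rmin_l u (2 * PI - u)); pose proof (Rmin_r u (2 * PI - u)).
  apply Rabs_def2 in Hv. lra.
Qed.

Lemma dt_speed (tb : R) (gam : R -> R -> V3) (th vT : R -> R -> R) (vT0 : R -> R) :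
  smoothV_on (fun t _ => 0 < t < tb) gam ->
  smooth_on (fun t _ => 0 < t < tb) th ->
  (forall t u, 0 <= t < tb -> 0 < speed gam t u) ->
  (forall t u, 0 <= t < tb -> 0 <= u < 2 * PI ->
     vT t u = vT0 t + int_kpsi gam th t u
              - arclen gam t u / curve_length gam t * int_kpsi gam th t (2 * PI)) ->
  (forall t u, 0 < t < tb ->
     pdtV gam t u = vadd (kappa_nu gam th t u) (vscale (vT t u) (tangent gam t u))) ->
  forall t u, 0 < t < tb -> 0 < u < 2 * PI ->
  is_derive (fun t' => speed gam t' u) t
    (- speed gam t u * (int_kpsi gam th t (2 * PI) / curve_length gam t)).
Proof.
  intros [Sx [Sy Sz]] Sth Hpos Hform Hev t u Ht Hu.
  set (fx := fun t u => vx (gam t u)) in *.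
  set (fy := fun t u => vy (gam t u)) in *.
  set (fz := fun t u => vz (gam t u)) in *.
  set (P1 := fun u => pdu fx t u).
  set (P2 := fun u => pdu fy t u).
  set (P3 := fun u => pdu fz t u).
  set (W1 := fun u => pdt fx t u).
  set (W2 := fun u => pdt fy t u).
  set (W3 := fun u => pdt fz t u).
  set (C := fun u => cos (th t u)).
  set (S := fun u => sin (th t u)).
  set (V := fun u => vT t u).
  set (H := fun w => curvature gam t w * psi1 gam th t w * speed gam t w).
  set (I := int_kpsi gam th t (2 * PI)).
  set (L := curve_length gam t).
  assert (Ht' : 0 <= t < tb) by lra.
  assert (Hg : forall v, 0 < sqrt (P1 v * P1 v + P2 v * P2 v + P3 v * P3 v)).
  { intros v; exact (Hpos t v Ht'). }
  assert (E1 : forall v, ex_derive P1 v) by (intros v; apply (sm_basic _ _ t v (sm_pdu _ _ Sx) Ht)).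
  assert (E2 : forall v, ex_derive P2 v) by (intros v; apply (sm_basic _ _ t v (sm_pdu _ _ Sy) Ht)).
  assert (E3 : forall v, ex_derive P3 v) by (intros v; apply (sm_basic _ _ t v (sm_pdu _ _ Sz) Ht)).
  assert (F1 : forall v, ex_derive (Derive P1) v)
    by (intros v; apply (sm_basic _ _ t v (sm_pdu _ _ (sm_pdu _ _ Sx)) Ht)).
  assert (F2 : forall v, ex_derive (Derive P2) v)
    by (intros v; apply (sm_basic _ _ t v (sm_pdu _ _ (sm_pdu _ _ Sy)) Ht)).
  assert (F3 : forall v, ex_derive (Derive P3) v)
    by (intros v; apply (sm_basic _ _ t v (sm_pdu _ _ (sm_pdu _ _ Sz)) Ht)).
  assert (CC : forall v, continuous C v).
  { intros v. apply cR_d. unfold C.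
    destruct (sm_basic _ _ t v Sth Ht) as [_ [_ h]].
    auto_derive. exact h. }
  assert (CH : forall v, continuous H v /\ continuous (speed gam t) v).
  { intros v. destruct (contH P1 P2 P3 C v Hg E1 E2 E3 F1 F2 F3 CC) as [c1 c2].
    split; [ eapply continuous_ext; [|exact c2] | eapply continuous_ext; [|exact c1] ];
    intros; reflexivity. }
  assert (HV : is_derive V u (H u - sqrt (P1 u * P1 u + P2 u * P2 u + P3 u * P3 u) / L * I)).
  { apply (is_derive_ext_loc (fun v => vT0 t + int_kpsi gam th t v - arclen gam t v / L * I)).
    { apply filter_imp with (2 := loc_int u Hu). intros v Hv. symmetry. apply Hform; assumption. }
    eapply dR_val.
    apply dR_minus; [apply dR_plus|].
    - apply (is_derive_const (vT0 t) u).
    - apply (ftc H u). intros z; apply CH.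
    - apply dR_mult; [|apply (is_derive_const I u)].
      apply dR_mult; [|apply (is_derive_const (/ L) u)].
      apply (ftc (speed gam t) u). intros z; apply CH.
    - change (zero : R) with 0. change (speed gam t u) with (sqrt (P1 u * P1 u + P2 u * P2 u + P3 u * P3 u)). unfold Rdiv. ring. }
  assert (K := core P1 P2 P3 W1 W2 W3 C S V H I L u Hg E1 E2 E3
    (fun v => f_equal vx (Hev t v Ht)) (fun v => f_equal vy (Hev t v Ht))
    (fun v => f_equal vz (Hev t v Ht)) HV eq_refl
    (proj2 (proj2 (sm_basic _ _ t u (sm_pdt _ _ Sx) Ht)))
    (proj2 (proj2 (sm_basic _ _ t u (sm_pdt _ _ Sy) Ht)))
    (proj2 (proj2 (sm_basic _ _ t u (sm_pdt _ _ Sz) Ht)))).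
  cbv beta zeta in K.
  apply is_derive_ext with (fun t' => sqrt (pdu fx t' u * pdu fx t' u + pdu fy t' u * pdu fy t' u + pdu fz t' u * pdu fz t' u)).
  { intros; reflexivity. }
  eapply dR_val.
  { apply (is_derive_sqrt (fun t' => pdu fx t' u * pdu fx t' u + pdu fy t' u * pdu fy t' u + pdu fz t' u * pdu fz t' u)).
    - apply dR_plus; [apply dR_plus|]; apply dR_mult; apply Derive_correct.
      1-6: first [ exact (proj1 (proj2 (sm_basic _ _ t u (sm_pdu _ _ Sx) Ht)))
                 | exact (proj1 (proj2 (sm_basic _ _ t u (sm_pdu _ _ Sy) Ht)))
                 | exact (proj1 (proj2 (sm_basic _ _ t u (sm_pdu _ _ Sz) Ht)))].
    - assert (h := Hg u). destruct (Rle_or_lt (pdu fx t u * pdu fx t u + pdu fy t u * pdu fy t u + pdu fz t u * pdu fz t u) 0) as [h'|h']; [|exact h'].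
      change (0 < sqrt (pdu fx t u * pdu fx t u + pdu fy t u * pdu fy t u + pdu fz t u * pdu fz t u)) in h.
      rewrite sqrt_neg_0 in h; lra. }
  change (Derive (fun y : R_AbsRing => pdu fx y u) t) with (pdt (pdu fx) t u).
  rewrite (schwarz_sm tb fx t u Sx Ht). change (pdu (pdt fx) t u) with (Derive W1 u).
  change (Derive (fun y : R_AbsRing => pdu fy y u) t) with (pdt (pdu fy) t u).
  rewrite (schwarz_sm tb fy t u Sy Ht). change (pdu (pdt fy) t u) with (Derive W2 u).
  change (Derive (fun y : R_AbsRing => pdu fz y u) t) with (pdt (pdu fz) t u).
  rewrite (schwarz_sm tb fz t u Sz Ht). change (pdu (pdt fz) t u) with (Derive W3 u).
  change (pdu fx t u) with (P1 u). change (pdu fy t u) with (P2 u). change (pdu fz t u) with (P3 u).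
  change (speed gam t u) with (sqrt (P1 u * P1 u + P2 u * P2 u + P3 u * P3 u)).
  fold I L.
  assert (g0 := Rgt_not_eq _ _ (Hg u)).
  set (g := sqrt (P1 u * P1 u + P2 u * P2 u + P3 u * P3 u)) in *.
  transitivity ((P1 u * Derive W1 u + P2 u * Derive W2 u + P3 u * Derive W3 u) / g).
  { field. exact g0. }
  rewrite K. unfold Rdiv. set (iL := / L). field. exact g0.
Qed.

Lemma small_zero x : (forall eps, 0 < eps -> Rabs x < eps) -> x = 0.
Proof.
  intros H. destruct (Req_dec x 0) as [h|h]; auto.
  specialize (H (Rabs x) (Rabs_pos_lt _ h)). lra.
Qed.

Lemma lim_right (f : R -> R) (a b c : R) : a < b -> (forall s, a < s < b -> f s = c) ->
  filterlim f (within (fun s => a <= s < b) (locally a)) (locally (f a)) -> f a = c.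
Proof.
  intros Hab Hc Hl. apply Rminus_diag_uniq. apply small_zero. intros eps He.
  specialize (Hl (ball (f a) (mkposreal _ He)) (locally_ball _ _)).
  destruct Hl as [d Hd].
  set (s := a + Rmin d (b - a) / 2).
  assert (h1 : 0 < Rmin d (b - a)) by (apply Rmin_glb_lt; [apply cond_pos|lra]).
  pose proof (Rmin_l d (b - a)); pose proof (Rmin_r d (b - a)).
  assert (Hs : a < s < b) by (unfold s; lra).
  assert (B : ball a d s).
  { change (Rabs (s - a) < d). rewrite Rabs_right; unfold s; lra. }
  specialize (Hd s B ltac:(lra)). rewrite (Hc s Hs) in Hd.
  change (Rabs (c - f a) < eps) in Hd. rewrite Rabs_minus_sym. exact Hd.
Qed.

Lemma phi_t tb t0 u : 
  filterlim (fun s => (s, u)) (within (fun s => 0 <= s < tb) (locally t0))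
    (within (fun p : R * R => 0 <= fst p < tb) (locally (t0, u))).
Proof.
  intros P [e He]. exists e. intros y Hy Dy. apply (He (y, u)).
  split; [exact Hy | apply ball_center]. exact Dy.
Qed.

Lemma phi_u tb t0 u (S : R -> Prop) : 0 <= t0 < tb ->
  filterlim (fun v => (t0, v)) (within S (locally u))
    (within (fun p : R * R => 0 <= fst p < tb) (locally (t0, u))).
Proof.
  intros Ht P [e He]. exists e. intros y Hy Dy. apply (He (t0, y)).
  split; [apply ball_center | exact Hy]. exact Ht.
Qed.

Lemma speed_lim {A : Type} (F : (A -> Prop) -> Prop) {FF : Filter F} (phi : A -> R * R)
  tb (gam : R -> R -> V3) t0 u0 :
  filterlim phi F (within (fun p : R * R => 0 <= fst p < tb) (locally (t0, u0))) ->
  (cont2_within (fun t' _ => 0 <= t' < tb) (fun t u => vx (pduV gam t u)) t0 u0 /\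
     cont2_within (fun t' _ => 0 <= t' < tb) (fun t u => vy (pduV gam t u)) t0 u0 /\
     cont2_within (fun t' _ => 0 <= t' < tb) (fun t u => vz (pduV gam t u)) t0 u0) ->
  filterlim (fun a => speed gam (fst (phi a)) (snd (phi a))) F (locally (speed gam t0 u0)).
Proof.
  intros Hphi [Cx [Cy Cz]].
  unfold cont2_within in *.
  pose proof (filterlim_comp _ _ _ _ _ _ _ _ Hphi Cx) as Lx.
  pose proof (filterlim_comp _ _ _ _ _ _ _ _ Hphi Cy) as Ly.
  pose proof (filterlim_comp _ _ _ _ _ _ _ _ Hphi Cz) as Lz.
  cbv beta in Lx, Ly, Lz.
  unfold speed, vnorm, vdot.
  apply (filterlim_comp _ _ _ _ sqrt _ (locally (vx (pduV gam t0 u0) * vx (pduV gam t0 u0) + vy (pduV gam t0 u0) * vy (pduV gam t0 u0) + vz (pduV gam t0 u0) * vz (pduV gam t0 u0)))).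
  2: apply continuous_sqrt.
  assert (M : forall (h : A -> R) l, filterlim h F (locally l) -> filterlim (fun a => h a * h a) F (locally (l * l))).
  { intros h l Hh. apply (filterlim_comp_2 h h Rmult Hh Hh). apply (filterlim_mult (K := R_AbsRing) l l). }
  assert (P : forall (h k : A -> R) l m, filterlim h F (locally l) -> filterlim k F (locally m) -> filterlim (fun a => h a + k a) F (locally (l + m))).
  { intros h k l m Hh Hk. apply (filterlim_comp_2 h k Rplus Hh Hk). apply (filterlim_plus (V := R_NormedModule) l m). }
  apply P; [apply P|]; apply M; assumption.
Qed.

Lemma lim_mult {A : Type} (F : (A -> Prop) -> Prop) {FF : Filter F} (h1 h2 : A -> R) l1 l2 :
  filterlim h1 F (locally l1) -> filterlim h2 F (locally l2) ->
  filterlim (fun s => h1 s * h2 s) F (locally (l1 * l2)).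
Proof. intros H1 H2. apply (filterlim_comp_2 h1 h2 Rmult H1 H2). apply (filterlim_mult (K := R_AbsRing) l1 l2). Qed.
Lemma lim_plus {A : Type} (F : (A -> Prop) -> Prop) {FF : Filter F} (h1 h2 : A -> R) l1 l2 :
  filterlim h1 F (locally l1) -> filterlim h2 F (locally l2) ->
  filterlim (fun s => h1 s + h2 s) F (locally (l1 + l2)).
Proof. intros H1 H2. apply (filterlim_comp_2 h1 h2 Rplus H1 H2). apply (filterlim_plus (V := R_NormedModule) l1 l2). Qed.
Lemma lim_opp {A : Type} (F : (A -> Prop) -> Prop) {FF : Filter F} (h1 : A -> R) l1 :
  filterlim h1 F (locally l1) -> filterlim (fun s => - h1 s) F (locally (- l1)).
Proof. intros H1. apply (filterlim_comp _ _ _ h1 Ropp F (locally l1) _ H1). apply (filterlim_opp (V := R_NormedModule) l1). Qed.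
Lemma lim_lin {A : Type} (F : (A -> Prop) -> Prop) {FF : Filter F} (h1 h2 : A -> R) l1 l2 a b :
  filterlim h1 F (locally l1) -> filterlim h2 F (locally l2) ->
  filterlim (fun s => h1 s * a - b * h2 s) F (locally (l1 * a - b * l2)).
Proof.
  intros H1 H2. unfold Rminus.
  apply (lim_plus F (fun s => h1 s * a) (fun s => - (b * h2 s))).
  - apply (lim_mult F h1 (fun _ => a)). exact H1. apply filterlim_const.
  - apply (lim_opp F (fun s => b * h2 s)). apply (lim_mult F (fun _ => b) h2). apply filterlim_const. exact H2.
Qed.

Lemma pdu_per (f : R -> R -> R) t v : (forall u, f t (u + 2 * PI) = f t u) ->
  pdu f t (v + 2 * PI) = pdu f t v.
Proof.
  intros H. unfold pdu.
  transitivity (Derive_n (fun u => f t u) 1 (v + 2 * PI)); [reflexivity|].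
  rewrite <- Derive_n_comp_trans. simpl. apply Derive_ext. intros; apply H.
Qed.

Lemma speed_per (gam : R -> R -> V3) t v : (forall t u, gam t (u + 2 * PI) = gam t u) ->
  speed gam t (v + 2 * PI) = speed gam t v.
Proof.
  intros H.
  assert (E : forall x, speed gam t x = sqrt (pdu (fun t u => vx (gam t u)) t x * pdu (fun t u => vx (gam t u)) t x
     + pdu (fun t u => vy (gam t u)) t x * pdu (fun t u => vy (gam t u)) t x
     + pdu (fun t u => vz (gam t u)) t x * pdu (fun t u => vz (gam t u)) t x)) by reflexivity.
  rewrite !E.
  rewrite (pdu_per (fun t u => vx (gam t u))), (pdu_per (fun t u => vy (gam t u))),
    (pdu_per (fun t u => vz (gam t u))); try reflexivity; intros; cbv beta; rewrite H; reflexivity.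
Qed.

Lemma speed_per_nat (gam : R -> R -> V3) t v n : (forall t u, gam t (u + 2 * PI) = gam t u) ->
  speed gam t (v + INR n * (2 * PI)) = speed gam t v.
Proof.
  intros H. induction n as [|n IH].
  - simpl. rewrite Rmult_0_l, Rplus_0_r. reflexivity.
  - rewrite S_INR. replace (v + (INR n + 1) * (2 * PI)) with ((v + INR n * (2 * PI)) + 2 * PI) by ring.
    rewrite speed_per; assumption.
Qed.

Lemma speed_per_Z (gam : R -> R -> V3) t v z : (forall t u, gam t (u + 2 * PI) = gam t u) ->
  speed gam t (v + IZR z * (2 * PI)) = speed gam t v.
Proof.
  intros H. destruct z as [|p|p].
  - simpl. rewrite Rmult_0_l, Rplus_0_r. reflexivity.
  - rewrite <- positive_nat_Z, <- INR_IZR_INZ. apply speed_per_nat; assumption.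
  - rewrite <- Pos2Z.opp_pos, opp_IZR, <- positive_nat_Z, <- INR_IZR_INZ.
    rewrite <- (speed_per_nat gam t (v + - INR (Pos.to_nat p) * (2 * PI)) (Pos.to_nat p) H).
    f_equal. ring.
Qed.

Lemma reduce u : exists z : Z, 0 <= u - IZR z * (2 * PI) < 2 * PI.
Proof.
  pose proof PI_RGT_0 as hp.
  destruct (archimed (u / (2 * PI))) as [a b].
  exists (up (u / (2 * PI)) - 1)%Z. rewrite minus_IZR.
  set (k := IZR (up (u / (2 * PI)))) in *.
  assert (E : u = (u / (2 * PI)) * (2 * PI)) by (field; lra).
  split.
  - assert (h : 0 <= (u / (2 * PI) - (k - 1)) * (2 * PI)) by (apply Rmult_le_pos; lra).
    rewrite E at 1. lra.
  - assert (h : (u / (2 * PI) - (k - 1)) * (2 * PI) < 1 * (2 * PI)).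
    { apply Rmult_lt_compat_r; lra. }
    rewrite E at 1. lra.
Qed.

Lemma phi_u' tb t0 u : 0 <= t0 < tb ->
  filterlim (fun v => (t0, v)) (locally u)
    (within (fun p : R * R => 0 <= fst p < tb) (locally (t0, u))).
Proof.
  intros Ht P [e He]. exists e. intros y Hy. apply (He (t0, y)).
  split; [apply ball_center | exact Hy]. exact Ht.
Qed.

Theorem mainTheorem2
  (tb : R) (gam : R -> R -> V3) (th vth vT : R -> R -> R) (vT0 : R -> R) :
  (forall t u, gam t (u + 2 * PI) = gam t u) ->
  (forall t u, cos (th t (u + 2 * PI)) = cos (th t u) /\
               sin (th t (u + 2 * PI)) = sin (th t u)) ->
  smoothV_on (fun t _ => 0 < t < tb) gam ->
  smooth_on (fun t _ => 0 < t < tb) th ->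
  (forall t u, 0 <= t < tb ->
     cont2_within (fun t' _ => 0 <= t' < tb) (fun t u => vx (pduV gam t u)) t u /\
     cont2_within (fun t' _ => 0 <= t' < tb) (fun t u => vy (pduV gam t u)) t u /\
     cont2_within (fun t' _ => 0 <= t' < tb) (fun t u => vz (pduV gam t u)) t u) ->
  (forall t u, 0 <= t < tb -> 0 < speed gam t u) ->
  Ck_on 1 (fun t _ => 0 < t < tb) vth ->
  (forall t u, 0 < t < tb -> is_derive (fun t' => th t' u) t (vth t u)) ->
  (forall t, 0 <= t < tb -> continuity_pt vT0 t) ->
  (forall t, 0 < t < tb -> ex_derive vT0 t /\ continuity_pt (Derive vT0) t) ->
  (forall t u, 0 <= t < tb -> 0 <= u < 2 * PI ->
     vT t u = vT0 t + int_kpsi gam th t u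
              - arclen gam t u / curve_length gam t * int_kpsi gam th t (2 * PI)) ->
  (forall t u, 0 < t < tb ->
     pdtV gam t u = vadd (kappa_nu gam th t u) (vscale (vT t u) (tangent gam t u))) ->
  forall u t1 t2, 0 <= t1 < tb -> 0 <= t2 < tb ->
    speed gam t1 u / curve_length gam t1 = speed gam t2 u / curve_length gam t2.
Proof.
  intros Hper _ Hsg Hsth Hc0 Hpos _ _ _ _ Hform Hev u t1 t2 Ht1 Ht2.
  pose proof PI_RGT_0 as hPI.
  set (g := speed gam).
  assert (DS := dt_speed tb gam th vT vT0 Hsg Hsth Hpos Hform Hev).
  assert (R2 : forall t t' v w, 0 < t < tb -> 0 < t' < tb -> 0 < v < 2 * PI -> 0 < w < 2 * PI ->
     g t v * g t' w = g t' v * g t w).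
  { intros t t' v w Ht Ht' Hv Hw.
    set (r := fun s => g s v * / g s w).
    assert (Dr : forall s, 0 < s < tb -> is_derive r s 0).
    { intros s Hs. unfold r.
      assert (gw : g s w <> 0) by (apply Rgt_not_eq, Hpos; lra).
      eapply dR_val. apply dR_mult. apply (DS s v Hs Hv).
      apply (is_derive_inv (fun s => g s w)). apply (DS s w Hs Hw). exact gw.
      cbv beta. unfold g in *. set (c := int_kpsi gam th s (2 * PI) / curve_length gam s). field. exact gw. }
    assert (Cr : forall s, 0 < s < tb -> continuity_pt r s).
    { intros s Hs. apply continuity_pt_filterlim. apply cR_d. eexists; apply Dr; exact Hs. }
    destruct (MVT_gen r t t' (fun _ => 0)) as [c [_ Hc]].
    { intros x Hx. apply Dr. pose proof (Rmin_l t t'); pose proof (Rmin_r t t');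
      pose proof (Rmax_l t t'); pose proof (Rmax_r t t').
      destruct (Rle_dec t t'); [rewrite Rmin_left in Hx by lra; rewrite Rmax_right in Hx by lra
       | rewrite Rmin_right in Hx by lra; rewrite Rmax_left in Hx by lra]; lra. }
    { intros x Hx. apply Cr. 
      destruct (Rle_dec t t'); [rewrite Rmin_left in Hx by lra; rewrite Rmax_right in Hx by lra
       | rewrite Rmin_right in Hx by lra; rewrite Rmax_left in Hx by lra]; lra. }
    unfold r in Hc.
    assert (g1 : 0 < g t w) by (apply Hpos; lra).
    assert (g2 : 0 < g t' w) by (apply Hpos; lra).
    assert (E : g t' v * / g t' w = g t v * / g t w) by lra.
    apply (Rmult_eq_reg_r (/ g t w * / g t' w)).
    transitivity (g t v * / g t w); [field; lra|].
    rewrite <- E. field; lra.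
    apply Rgt_not_eq. apply Rmult_lt_0_compat; apply Rinv_0_lt_compat; lra. }
  assert (Z0 : forall t' v w, 0 < t' < tb -> 0 < v < 2 * PI -> 0 < w < 2 * PI ->
     g 0 v * g t' w = g t' v * g 0 w).
  { intros t' v w Ht' Hv Hw.
    set (f := fun s => g s v * g t' w - g t' v * g s w).
    assert (H0 : 0 <= 0 < tb) by lra.
    assert (F0 : f 0 = 0).
    { apply (lim_right f 0 tb 0). lra.
      - intros s Hs. unfold f. rewrite (R2 s t' v w); try lra. 
      - unfold f. apply (lim_lin _ (fun s => g s v) (fun s => g s w)).
        + exact (speed_lim _ (fun s => (s, v)) tb gam 0 v (phi_t tb 0 v) (Hc0 0 v H0)).
        + exact (speed_lim _ (fun s => (s, w)) tb gam 0 w (phi_t tb 0 w) (Hc0 0 w H0)). }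
    unfold f in F0. lra. }
  assert (R3 : forall t t' v w, 0 <= t < tb -> 0 <= t' < tb -> 0 < v < 2 * PI -> 0 < w < 2 * PI ->
     g t v * g t' w = g t' v * g t w).
  { intros t t' v w Ht Ht' Hv Hw.
    destruct (Req_dec t 0) as [e|e]; destruct (Req_dec t' 0) as [e'|e'].
    - subst. ring.
    - subst t. apply Z0; lra.
    - subst t'. pose proof (Z0 t w v ltac:(lra) Hw Hv). lra.
    - apply R2; lra. }
  assert (Cg : forall t z, 0 <= t < tb -> continuous (g t) z).
  { intros t z Ht. exact (speed_lim _ (fun v => (t, v)) tb gam t z (phi_u' tb t z Ht) (Hc0 t z Ht)). }
  assert (L4 : forall t v, 0 <= t < tb -> 0 < v < 2 * PI ->
     g t v / curve_length gam t = g t1 v / curve_length gam t1).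
  { intros t v Ht Hv.
    assert (hP : 0 < PI < 2 * PI) by lra.
    assert (p1 : 0 < g t1 PI) by (apply Hpos; lra).
    assert (p2 : 0 < g t PI) by (apply Hpos; lra).
    set (k := g t PI / g t1 PI).
    assert (kp : 0 < k) by (unfold k; apply Rdiv_lt_0_compat; lra).
    assert (Hk : forall w, 0 < w < 2 * PI -> g t w = k * g t1 w).
    { intros w Hw. pose proof (R3 t t1 w PI Ht Ht1 Hw hP) as E. unfold k.
      apply (Rmult_eq_reg_r (g t1 PI)); [|lra]. rewrite E. field. lra. }
    assert (EX : ex_RInt (fun u => speed gam t1 u) 0 (2 * PI)).
    { apply (ex_RInt_continuous (V := R_CompleteNormedModule)). intros z _. apply (Cg t1 z Ht1). }
    assert (EL : curve_length gam t = k * curve_length gam t1).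
    { unfold curve_length.
      rewrite (RInt_ext (V := R_CompleteNormedModule) (fun u => speed gam t u) (fun u => k * speed gam t1 u)).
      - exact (RInt_scal (V := R_CompleteNormedModule) (fun u => speed gam t1 u) 0 (2 * PI) k EX).
      - intros x Hx. rewrite Rmin_left in Hx by lra. rewrite Rmax_right in Hx by lra. apply Hk; lra. }
    rewrite EL. unfold Rdiv. rewrite Rinv_mult. rewrite (Hk v Hv).
    set (iL := / curve_length gam t1). field. lra. }
  destruct (reduce u) as [z Hz].
  set (w := u - IZR z * (2 * PI)) in *.
  assert (Eu : forall t, g t u = g t w).
  { intros t. unfold g. rewrite <- (speed_per_Z gam t w z Hper). f_equal. unfold w. ring. }
  rewrite !Eu.
  destruct (Req_dec w 0) as [w0|wpos].
  - rewrite w0.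
    set (f := fun v => g t1 v * / curve_length gam t1 - / curve_length gam t2 * g t2 v).
    assert (F0 : f 0 = 0).
    { apply (lim_right f 0 (2 * PI) 0). lra.
      - intros s Hs. unfold f.
        pose proof (L4 t2 s Ht2 Hs). unfold Rdiv in H. rewrite Rmult_comm in H. lra.
      - unfold f. apply (lim_lin _ (fun s => g t1 s) (fun s => g t2 s)).
        + exact (speed_lim _ (fun v => (t1, v)) tb gam t1 0 (phi_u tb t1 0 _ Ht1) (Hc0 t1 0 Ht1)).
        + exact (speed_lim _ (fun v => (t2, v)) tb gam t2 0 (phi_u tb t2 0 _ Ht2) (Hc0 t2 0 Ht2)). }
    unfold f in F0. unfold Rdiv. lra.
  - rewrite (L4 t2 w Ht2). reflexivity. lra.
Qed.
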